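(* Let $(A,\cdot,\circ)$ be a skew brace such that $A = B\cdot C$ or $A = B\circ C$ for some sub-skew braces $B$ and $C$ satisfying both of the following: (1) $B$ and $C$ are trivial skew braces; (2) $B$ and $C$ are both left ideals and right ideals in the opposite skew brace $A^{\mathrm{op}}$. Then $A' = A*A$ is a trivial skew brace, i.e. $A$ is meta-trivial (equivalently $A'*A' = 1$).
   Context: A skew brace is a set $A$ with two group operations $\cdot$ (often written by juxtaposition) and $\circ$ such that $a\circ(bc) = (a\circ b)\,a^{-1}\,(a\circ c)$ for all $a,b,c\in A$. The two groups have the same identity $1$; $a^{-1}$ denotes the inverse of $a$ in $(A,\cdot)$ and $\overline{a}$ its inverse in $(A,\circ)$. Define $a*b = a^{-1}(a\circ b)b^{-1}$. For subsets $X,Y\subseteq A$, $X*Y$ denotes the subgroup of $(A,\cdot)$ generated by all $x*y$ with $x\in X$, $y\in Y$. A sub-skew brace is a subset that is a subgroup of both $(A,\cdot)$ and $(A,\circ)$. A skew brace (or sub-skew brace) $B$ is trivial if $a\circ b = ab$ for all $a,b\in B$. $A'=A*A$ (it is a sub-skew brace, in fact an ideal); $A$ is meta-trivial if $A'$ is a trivial skew brace. The opposite skew brace $A^{\mathrm{op}}$ is the set $A$ with operations $a\cdot^{\mathrm{op}} b = ba$ and the same $\circ$. Define $\lambda^{\mathrm{op}}_a(b) = (a\circ b)a^{-1}$. A subgroup $I$ of $(A,\cdot)$ is a left ideal in $A^{\mathrm{op}}$ iff $\lambda^{\mathrm{op}}_a(x)\in I$ for all $a\in A$, $x\in I$, and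 a right ideal in $A^{\mathrm{op}}$ iff $a^{-1}\lambda^{\mathrm{op}}_x(a)\in I$ for all $x\in I$, $a\in A$. *)

(* Defs.v *)
Record skew_brace := SkewBrace {
  sb_car :> Type;
  sb_mul : sb_car -> sb_car -> sb_car;
  sb_one : sb_car;
  sb_inv : sb_car -> sb_car;
  sb_circ : sb_car -> sb_car -> sb_car;
  sb_cinv : sb_car -> sb_car;
  sb_mulA : forall a b c, sb_mul a (sb_mul b c) = sb_mul (sb_mul a b) c;
  sb_mul1l : forall a, sb_mul sb_one a = a;
  sb_mul1r : forall a, sb_mul a sb_one = a;
  sb_mulVl : forall a, sb_mul (sb_inv a) a = sb_one;
  sb_mulVr : forall a, sb_mul a (sb_inv a) = sb_one;
  sb_circA : forall a b c, sb_circ a (sb_circ b c) = sb_circ (sb_circ a b) c;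
  sb_circ1l : forall a, sb_circ sb_one a = a;
  sb_circ1r : forall a, sb_circ a sb_one = a;
  sb_circVl : forall a, sb_circ (sb_cinv a) a = sb_one;
  sb_circVr : forall a, sb_circ a (sb_cinv a) = sb_one;
  sb_compat : forall a b c,
    sb_circ a (sb_mul b c) = sb_mul (sb_mul (sb_circ a b) (sb_inv a)) (sb_circ a c)
}.

Arguments sb_mul {s}.
Arguments sb_one {s}.
Arguments sb_inv {s}.
Arguments sb_circ {s}.
Arguments sb_cinv {s}.

Section Defs.
Variable A : skew_brace.

Definition star (a b : A) : A :=
  sb_mul (sb_mul (sb_inv a) (sb_circ a b)) (sb_inv b).

Definition is_mul_subgroup (P : A -> Prop) : Prop :=
  P sb_one /\ (forall x y, P x -> P y -> P (sb_mul x y)) /\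
  (forall x, P x -> P (sb_inv x)).

Definition is_circ_subgroup (P : A -> Prop) : Prop :=
  P sb_one /\ (forall x y, P x -> P y -> P (sb_circ x y)) /\
  (forall x, P x -> P (sb_cinv x)).

Definition mul_gen (S : A -> Prop) (x : A) : Prop :=
  forall P, is_mul_subgroup P -> (forall y, S y -> P y) -> P x.

Definition star_set (X Y : A -> Prop) : A -> Prop :=
  mul_gen (fun z => exists x y, X x /\ Y y /\ z = star x y).

Definition derived : A -> Prop := star_set (fun _ => True) (fun _ => True).

Definition is_sub_skew_brace (B : A -> Prop) : Prop :=
  is_mul_subgroup B /\ is_circ_subgroup B.

Definition is_trivial_on (B : A -> Prop) : Prop :=
  forall a b, B a -> B b -> sb_circ a b = sb_mul a b.

Definition lambda_op (a b : A) : A := sb_mul (sb_circ a b) (sb_inv a).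

Definition is_left_ideal_op (I : A -> Prop) : Prop :=
  is_mul_subgroup I /\ forall a x, I x -> I (lambda_op a x).

Definition is_right_ideal_op (I : A -> Prop) : Prop :=
  is_mul_subgroup I /\ forall x a, I x -> I (sb_mul (sb_inv a) (lambda_op x a)).

Definition is_mul_product (B C : A -> Prop) : Prop :=
  forall x : A, exists b c, B b /\ C c /\ x = sb_mul b c.

Definition is_circ_product (B C : A -> Prop) : Prop :=
  forall x : A, exists b c, B b /\ C c /\ x = sb_circ b c.

Definition meta_trivial : Prop := is_trivial_on derived.

End Defs.

(* Main.v *)
Require Import Defs.

Section Gen.
Variable A : skew_brace.

Local Notation "a · b" := (@sb_mul A a b) (at level 40, left associativity).
Local Notation "a ∘ b" := (@sb_circ A a b) (at level 40, left associativity).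
Local Notation inv := (@sb_inv A).
Local Notation ci := (@sb_cinv A).
Local Notation one := (@sb_one A).

Lemma mulA (a b c : A) : a · (b · c) = a · b · c. Proof. apply sb_mulA. Qed.
Lemma mul1l (a : A) : one · a = a. Proof. apply sb_mul1l. Qed.
Lemma mul1r (a : A) : a · one = a. Proof. apply sb_mul1r. Qed.
Lemma mulVl (a : A) : inv a · a = one. Proof. apply sb_mulVl. Qed.
Lemma mulVr (a : A) : a · inv a = one. Proof. apply sb_mulVr. Qed.
Lemma mulVlA (x a : A) : x · inv a · a = x.
Proof. rewrite <- mulA, mulVl, mul1r. reflexivity. Qed.
Lemma mulVrA (x a : A) : x · a · inv a = x.
Proof. rewrite <- mulA, mulVr, mul1r. reflexivity. Qed.

Lemma inv_uniq (a b : A) : a · b = one -> b = inv a.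
Proof.
  intro H. rewrite <- (mul1l b). rewrite <- (mulVl a). rewrite <- mulA, H, mul1r. reflexivity.
Qed.
Lemma inv_mul (a b : A) : inv (a · b) = inv b · inv a.
Proof.
  symmetry. apply inv_uniq. rewrite mulA. rewrite <- (mulA a b (inv b)). rewrite mulVr, mul1r, mulVr. reflexivity.
Qed.
Lemma inv_inv (a : A) : inv (inv a) = a.
Proof. symmetry. apply inv_uniq. apply mulVl. Qed.
Lemma inv_one : inv one = (one : A).
Proof. symmetry. apply inv_uniq. apply mul1l. Qed.

Ltac gn := repeat (first [ rewrite mulA | rewrite inv_mul | rewrite inv_inv | rewrite inv_one
                          | rewrite mul1l | rewrite mul1r | rewrite mulVl | rewrite mulVr
                          | rewrite mulVlA | rewrite mulVrA ]).

Lemma mul_cancel_l (a b c : A) : a · b = a · c -> b = c.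
Proof. intro H. rewrite <- (mul1l b), <- (mul1l c), <- (mulVl a), <- !mulA, H. reflexivity. Qed.
Lemma mul_cancel_r (a b c : A) : b · a = c · a -> b = c.
Proof. intro H. rewrite <- (mulVrA b a), <- (mulVrA c a), H. reflexivity. Qed.

Lemma circA (a b c : A) : a ∘ (b ∘ c) = a ∘ b ∘ c. Proof. apply sb_circA. Qed.
Lemma circ1l (a : A) : one ∘ a = a. Proof. apply sb_circ1l. Qed.
Lemma circ1r (a : A) : a ∘ one = a. Proof. apply sb_circ1r. Qed.
Lemma circVl (a : A) : ci a ∘ a = one. Proof. apply sb_circVl. Qed.
Lemma circVr (a : A) : a ∘ ci a = one. Proof. apply sb_circVr. Qed.
Lemma cinv_uniq (a b : A) : a ∘ b = one -> b = ci a.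
Proof.
  intro H. rewrite <- (circ1l b). rewrite <- (circVl a). rewrite <- circA, H, circ1r. reflexivity.
Qed.
Lemma cinv_circ (a b : A) : ci (a ∘ b) = ci b ∘ ci a.
Proof.
  symmetry. apply cinv_uniq. rewrite circA. rewrite <- (circA a b (ci b)). rewrite circVr, circ1r, circVr. reflexivity.
Qed.
Lemma cinv_cinv (a : A) : ci (ci a) = a.
Proof. symmetry. apply cinv_uniq. apply circVl. Qed.
Lemma cinv_one : ci one = (one : A).
Proof. symmetry. apply cinv_uniq. apply circ1l. Qed.
Lemma circVlA (x a : A) : x ∘ ci a ∘ a = x.
Proof. rewrite <- circA, circVl, circ1r. reflexivity. Qed.
Lemma circVrA (x a : A) : x ∘ a ∘ ci a = x.
Proof. rewrite <- circA, circVr, circ1r. reflexivity. Qed.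

Lemma compat (a b c : A) : a ∘ (b · c) = (a ∘ b) · inv a · (a ∘ c).
Proof. apply sb_compat. Qed.

Lemma circ_one_r_mul (a : A) : a ∘ one = a. Proof. apply circ1r. Qed.

Definition lam (a b : A) : A := inv a · (a ∘ b).

Lemma lam_def (a b : A) : a ∘ b = a · lam a b.
Proof. unfold lam. gn. reflexivity. Qed.

Lemma lam_mul (a b c : A) : lam a (b · c) = lam a b · lam a c.
Proof. unfold lam. rewrite compat. gn. reflexivity. Qed.

Lemma lam_one (a : A) : lam a one = one.
Proof. unfold lam. rewrite circ1r. apply mulVl. Qed.

Lemma lam_inv (a b : A) : lam a (inv b) = inv (lam a b).
Proof.
  apply inv_uniq. rewrite <- lam_mul, mulVr. apply lam_one.
Qed.

Lemma lam_circ (a b c : A) : lam (a ∘ b) c = lam a (lam b c).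
Proof.
  unfold lam at 1. rewrite <- circA. rewrite (lam_def b c). rewrite compat.
  rewrite mulA. rewrite (mulA (inv (a ∘ b)) (a ∘ b)). rewrite mulVl, mul1l.
  unfold lam. reflexivity.
Qed.

Lemma lam1 (b : A) : lam one b = b.
Proof. unfold lam. rewrite circ1l, inv_one, mul1l. reflexivity. Qed.

Lemma lam_ci_l (a b : A) : lam (ci a) (lam a b) = b.
Proof. rewrite <- lam_circ, circVl. apply lam1. Qed.
Lemma lam_ci_r (a b : A) : lam a (lam (ci a) b) = b.
Proof. rewrite <- lam_circ, circVr. apply lam1. Qed.

Lemma lam_inj (a b c : A) : lam a b = lam a c -> b = c.
Proof. intro H. rewrite <- (lam_ci_l a b), <- (lam_ci_l a c), H. reflexivity. Qed.

Lemma mul_as_circ (a b : A) : a · b = a ∘ lam (ci a) b.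
Proof. rewrite lam_def, lam_ci_r. reflexivity. Qed.

Local Notation ell := (lambda_op A).
Lemma ell_unfold (a b : A) : ell a b = (a ∘ b) · inv a.
Proof. reflexivity. Qed.
Lemma ell_def (a b : A) : a ∘ b = ell a b · a.
Proof. rewrite ell_unfold. gn. reflexivity. Qed.
Lemma ell_lam (a b : A) : ell a b = a · lam a b · inv a.
Proof. rewrite ell_unfold, lam_def. reflexivity. Qed.
Lemma ell_mul (a b c : A) : ell a (b · c) = ell a b · ell a c.
Proof. rewrite !ell_lam, lam_mul. gn. reflexivity. Qed.
Lemma ell_one (a : A) : ell a one = one.
Proof. rewrite ell_lam, lam_one. gn. reflexivity. Qed.
Lemma ell_inv (a b : A) : ell a (inv b) = inv (ell a b).
Proof. apply inv_uniq. rewrite <- ell_mul, mulVr. apply ell_one. Qed.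
Lemma ell_circ (a b c : A) : ell (a ∘ b) c = ell a (ell b c).
Proof.
  rewrite (ell_unfold (a ∘ b)). rewrite <- circA. rewrite (ell_def b c). rewrite compat.
  gn. rewrite (ell_unfold a (ell b c)). reflexivity.
Qed.
Lemma ell1 (b : A) : ell one b = b.
Proof. rewrite ell_unfold, circ1l, inv_one, mul1r. reflexivity. Qed.
Lemma ell_ci_l (a b : A) : ell (ci a) (ell a b) = b.
Proof. rewrite <- ell_circ, circVl. apply ell1. Qed.
Lemma ell_ci_r (a b : A) : ell a (ell (ci a) b) = b.
Proof. rewrite <- ell_circ, circVr. apply ell1. Qed.
Lemma mul_as_circ_r (p a : A) : p · a = a ∘ ell (ci a) p.
Proof. rewrite ell_def, ell_ci_r. reflexivity. Qed.

Local Notation star := (star A).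
Lemma star_unfold (a b : A) : star a b = inv a · (a ∘ b) · inv b.
Proof. reflexivity. Qed.
Lemma star_lam (a b : A) : star a b = lam a b · inv b.
Proof. reflexivity. Qed.
Lemma lam_star_eq (a b : A) : lam a b = star a b · b.
Proof. rewrite star_lam. gn. reflexivity. Qed.
Lemma star_mul_r (a b c : A) : star a (b · c) = star a b · b · star a c · inv b.
Proof. rewrite !star_lam, lam_mul. gn. reflexivity. Qed.
Lemma star_circ_l (a b c : A) : star (a ∘ b) c = lam a (star b c) · star a c.
Proof. rewrite !star_lam, lam_circ, lam_mul, lam_inv. gn. reflexivity. Qed.
Lemma lam_star (a b c : A) : lam a (star b c) = star (a ∘ b ∘ ci a) (lam a c).
Proof.
  rewrite !star_lam, lam_mul, lam_inv. rewrite !lam_circ, lam_ci_l. reflexivity.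
Qed.
Lemma star_one_r (a : A) : star a one = one.
Proof. rewrite star_lam, lam_one, inv_one, mul1r. reflexivity. Qed.
Lemma star_one_l (b : A) : star one b = one.
Proof. rewrite star_lam, lam1, mulVr. reflexivity. Qed.

Lemma circ_conj (a b : A) : a ∘ b ∘ ci a = ell a (ell b (ci a)) · ell a b · a.
Proof. rewrite (ell_def (a ∘ b)), ell_circ, ell_def. gn. reflexivity. Qed.

Lemma mul_gen_sub (S : A -> Prop) : is_mul_subgroup A (mul_gen A S).
Proof.
  unfold is_mul_subgroup, mul_gen. split; [|split].
  - intros P [H1 _] _. exact H1.
  - intros x y Hx Hy P HP HS. destruct HP as [H1 [H2 H3]].
    apply H2; [apply Hx | apply Hy]; try split; auto.
  - intros x Hx P HP HS. destruct HP as [H1 [H2 H3]].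
    apply H3. apply Hx; try split; auto.
Qed.
Lemma mul_gen_incl (S : A -> Prop) x : S x -> mul_gen A S x.
Proof. intros Hx P HP HS. apply HS, Hx. Qed.
Lemma mul_gen_ind (S P : A -> Prop) x :
  is_mul_subgroup A P -> (forall y, S y -> P y) -> mul_gen A S x -> P x.
Proof. intros HP HS Hx. apply Hx; auto. Qed.


Section Sub.
Variable R : A -> Prop.
Hypothesis HRs : is_sub_skew_brace A R.
Hypothesis HRt : is_trivial_on A R.

Lemma R1 : R one. Proof. destruct HRs as [[h _] _]. exact h. Qed.
Lemma Rmul x y : R x -> R y -> R (x · y). Proof. destruct HRs as [[_ [h _]] _]. apply h. Qed.
Lemma Rinv x : R x -> R (inv x). Proof. destruct HRs as [[_ [_ h]] _]. apply h. Qed.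
Lemma Rcirc x y : R x -> R y -> R (x ∘ y). Proof. destruct HRs as [_ [_ [h _]]]. apply h. Qed.
Lemma Rci x : R x -> R (ci x). Proof. destruct HRs as [_ [_ [_ h]]]. apply h. Qed.

Lemma triv x y : R x -> R y -> x ∘ y = x · y. Proof. intros; apply HRt; auto. Qed.
Lemma ci_triv x : R x -> ci x = inv x.
Proof.
  intro Hx. symmetry. apply cinv_uniq. rewrite triv; auto using Rinv. apply mulVr.
Qed.
Lemma lam_triv x y : R x -> R y -> lam x y = y.
Proof. intros Hx Hy. unfold lam. rewrite triv; auto. gn. reflexivity. Qed.
Lemma ell_triv x y : R x -> R y -> lambda_op A x y = x · y · inv x.
Proof. intros Hx Hy. rewrite ell_unfold, triv; auto. Qed.
Lemma star_triv x y : R x -> R y -> star x y = one.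
Proof. intros Hx Hy. rewrite star_lam, lam_triv; auto. apply mulVr. Qed.
End Sub.

Definition good (P Q : A -> Prop) : Prop :=
  is_sub_skew_brace A P /\ is_sub_skew_brace A Q /\ is_trivial_on A P /\ is_trivial_on A Q /\
  is_left_ideal_op A P /\ is_right_ideal_op A P /\ is_left_ideal_op A Q /\ is_right_ideal_op A Q /\
  (forall n, exists p q, P p /\ Q q /\ n = p · q) /\ (forall n, exists q p, Q q /\ P p /\ n = q · p).

Lemma good_swap P Q : good P Q -> good Q P.
Proof.
  intros (h1&h2&h3&h4&h5&h6&h7&h8&h9&h10). unfold good.
  repeat (split; [assumption|]). assumption.
Qed.

Section Pair.
Variables P Q : A -> Prop.
Hypothesis HG : good P Q.

Lemma HPs : is_sub_skew_brace A P. Proof. apply HG. Qed.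
Lemma HQs : is_sub_skew_brace A Q. Proof. apply HG. Qed.
Lemma HPt : is_trivial_on A P. Proof. apply HG. Qed.
Lemma HQt : is_trivial_on A Q. Proof. apply HG. Qed.
Lemma HPl a x : P x -> P (ell a x). Proof. destruct HG as (_&_&_&_&[_ h]&_). apply h. Qed.
Lemma HPr x a : P x -> P (inv a · ell x a). Proof. destruct HG as (_&_&_&_&_&[_ h]&_). apply h. Qed.
Lemma HQl a x : Q x -> Q (ell a x). Proof. destruct HG as (_&_&_&_&_&_&[_ h]&_). apply h. Qed.
Lemma HQr x a : Q x -> Q (inv a · ell x a). Proof. destruct HG as (_&_&_&_&_&_&_&[_ h]&_). apply h. Qed.
Lemma dPQ n : exists p q, P p /\ Q q /\ n = p · q. Proof. destruct HG as (_&_&_&_&_&_&_&_&h&_). apply h. Qed.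
Lemma dQP n : exists q p, Q q /\ P p /\ n = q · p. Proof. destruct HG as (_&_&_&_&_&_&_&_&_&h). apply h. Qed.

Hint Resolve HPs HQs HPt HQt : core.

Lemma dPoQ n : exists p q, P p /\ Q q /\ n = p ∘ q.
Proof.
  destruct (dQP n) as (q & p & Hq & Hp & ->).
  exists p, (ell (ci p) q). split; [exact Hp|split; [apply HQl; exact Hq|]].
  apply mul_as_circ_r.
Qed.

Definition E (z : A) : Prop := P z /\ Q z.

Lemma E1 : E one. Proof. split; apply R1; auto. Qed.
Lemma Emul x y : E x -> E y -> E (x · y).
Proof. intros [] []; split; apply Rmul; auto. Qed.
Lemma Einv x : E x -> E (inv x).
Proof. intros []; split; apply Rinv; auto. Qed.
Lemma Eell a e : E e -> E (ell a e).
Proof. intros []; split; [apply HPl|apply HQl]; auto. Qed.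

Lemma E_normal n e : E e -> E (n · e · inv n).
Proof.
  intro He. destruct (dPQ n) as (p & q & Hp & Hq & ->).
  assert (H1 : E (q · e · inv q)).
  { rewrite <- (ell_triv Q); auto. apply Eell; auto. apply He. }
  assert (H2 : E (p · (q · e · inv q) · inv p)).
  { rewrite <- (ell_triv P); auto. apply Eell; auto. apply H1. }
  replace (p · q · e · inv (p · q)) with (p · (q · e · inv q) · inv p) by (gn; reflexivity).
  exact H2.
Qed.

Definition cong (a b : A) : Prop := E (inv a · b).

Lemma cong_refl a : cong a a. Proof. unfold cong. rewrite mulVl. apply E1. Qed.
Lemma cong_sym a b : cong a b -> cong b a.
Proof. unfold cong. intro H. replace (inv b · a) with (inv (inv a · b)) by (gn; reflexivity). apply Einv, H. Qed.
Lemma cong_trans a b c : cong a b -> cong b c -> cong a c.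
Proof. unfold cong. intros H1 H2. replace (inv a · c) with ((inv a · b) · (inv b · c)) by (gn; reflexivity). apply Emul; auto. Qed.
Lemma cong_mul a a' b b' : cong a a' -> cong b b' -> cong (a · b) (a' · b').
Proof.
  unfold cong. intros H1 H2.
  replace (inv (a · b) · (a' · b')) with ((inv b · (inv a · a') · inv (inv b)) · (inv b · b'))
    by (gn; reflexivity).
  apply Emul; auto. apply E_normal, H1.
Qed.
Lemma cong_ell g a b : cong a b -> cong (ell g a) (ell g b).
Proof. unfold cong. intro H. rewrite <- ell_inv, <- ell_mul. apply Eell, H. Qed.
Lemma cong_mulE a e : E e -> cong a (a · e).
Proof. unfold cong. intro H. gn. exact H. Qed.

Lemma lamE e n : E e -> lam e n = n.
Proof.
  intros [HeP HeQ]. destruct (dPQ n) as (p & q & Hp & Hq & ->).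
  rewrite lam_mul, (lam_triv P), (lam_triv Q); auto.
Qed.

Lemma star_shift x e n : P x -> E e -> star (x · e) n = star x n.
Proof.
  intros Hx He. rewrite <- (triv P); auto; [|apply He].
  rewrite star_circ_l. rewrite (star_lam e), (lamE e n); auto. rewrite mulVr, lam_one, mul1l. reflexivity.
Qed.

Lemma theta x c : P x -> Q c -> cong c (ell x c).
Proof.
  intros Hx Hc. split.
  - apply HPr; auto.
  - apply Rmul; auto. apply Rinv; auto. apply HQl; auto.
Qed.
Lemma eta c x : Q c -> P x -> cong x (ell c x).
Proof.
  intros Hc Hx. split.
  - apply Rmul; auto. apply Rinv; auto. apply HPl; auto.
  - apply HQr; auto.
Qed.

Lemma LpiQP c b c' b' : Q c -> P b -> Q c' -> P b' -> cong (c · b) (c' · b') -> cong b b'.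
Proof.
  unfold cong. intros Hc Hb Hc' Hb' He.
  set (e := inv (c · b) · (c' · b')) in *.
  assert (Hf : E (inv c · c')).
  { split.
    - replace (inv c · c') with (b · e · inv b') by (unfold e; gn; reflexivity).
      apply Rmul; auto. apply Rmul; auto. apply He. apply Rinv; auto.
    - apply Rmul; auto. apply Rinv; auto. }
  replace (inv b · b') with ((inv b · inv (inv c · c') · inv (inv b)) · e) by (unfold e; gn; reflexivity).
  apply Emul; auto. apply E_normal. apply Einv, Hf.
Qed.

Lemma conj_circ c Y : Q c -> P Y -> cong (c ∘ Y ∘ ci c) (inv c · Y · c).
Proof.
  intros Hc HY. rewrite circ_conj. rewrite (ci_triv Q); auto.
  apply cong_mul; [apply cong_mul|].
  - apply cong_trans with (ell c (inv c)).
    + apply cong_ell. apply cong_sym. apply theta; auto. apply Rinv; auto.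
    + rewrite (ell_triv Q); auto; [|apply Rinv; auto]. gn. apply cong_refl.
  - apply cong_sym, eta; auto.
  - apply cong_refl.
Qed.

Lemma N3 x c n : P x -> Q c -> lam (lam x c) n = lam x (lam c (lam (ci x) n)).
Proof.
  intros Hx Hc.
  set (h := ell (ci c) (inv x)).
  assert (Hh : lam x c = x ∘ c ∘ h).
  { unfold lam at 1. rewrite mul_as_circ_r. rewrite cinv_circ, ell_circ.
    rewrite (ci_triv P HPs HPt x); auto. assert (Hxi : P (inv x)) by (apply Rinv; auto).
    rewrite (ell_triv P HPt (inv x) (inv x) Hxi Hxi).
    gn. reflexivity. }
  assert (He : E (x · h)).
  { split.
    - apply Rmul; auto. apply HPl, Rinv; auto.
    - replace (x · h) with (inv (inv x) · ell (ci c) (inv x)) by (unfold h; gn; reflexivity).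
      apply HQr. apply Rci; auto. }
  assert (Hh2 : h = ci x ∘ (x · h)).
  { rewrite (ci_triv P HPs HPt x Hx). rewrite (triv P HPt); [gn; reflexivity| apply Rinv; auto| apply He]. }
  set (e := x · h) in *.
  rewrite Hh, Hh2, !lam_circ, (lamE e n); auto.
Qed.

Lemma lamQ_star c y c0 b1 c1 : Q c -> P y -> Q c0 -> P b1 -> Q c1 ->
  c ∘ y ∘ ci c = b1 ∘ c1 -> lam c (star y c0) = star b1 c0.
Proof.
  intros Hc Hy Hc0 Hb1 Hc1 Heq. rewrite lam_star, Heq, (lam_triv Q); auto.
  rewrite star_circ_l, (star_triv Q); auto. rewrite lam_one, mul1l. reflexivity.
Qed.

Lemma lamP_star x Y c0 c2 b2 : P x -> P Y -> Q c2 -> P b2 ->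
  lam x c0 = c2 · b2 -> lam x (star Y c0) = star (x · Y · inv x) c2.
Proof.
  intros Hx HY Hc2 Hb2 Heq. rewrite lam_star, Heq.
  assert (Hxi : P (inv x)) by (apply Rinv; auto).
  assert (HxY : P (x · Y)) by (apply Rmul; auto).
  assert (HX : P (x · Y · inv x)) by (apply Rmul; auto).
  rewrite (ci_triv P HPs HPt x Hx), (triv P HPt x Y Hx HY), (triv P HPt (x · Y) (inv x) HxY Hxi).
  rewrite star_mul_r, (star_triv P HPt (x · Y · inv x) b2 HX Hb2).
  gn. reflexivity.
Qed.

Lemma P2gen x c x0 c0 : P x -> Q c -> P x0 -> Q c0 ->
  lam x (lam c (star x0 c0)) = lam c (lam x (star x0 c0)).
Proof.
  intros Hx Hc Hx0 Hc0.
  destruct (dQP (lam x c0)) as (c2 & b2 & Hc2 & Hb2 & E2).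
  destruct (dPoQ (c ∘ x0 ∘ ci c)) as (b1 & c1 & Hb1 & Hc1 & E1').
  assert (HX : P (x · x0 · inv x)). { apply Rmul; auto. apply Rmul; auto. apply Rinv; auto. }
  destruct (dPoQ (c ∘ (x · x0 · inv x) ∘ ci c)) as (b3 & c3 & Hb3 & Hc3 & E3).
  rewrite (lamQ_star c x0 c0 b1 c1); auto.
  rewrite (lamP_star x b1 c0 c2 b2); auto.
  rewrite (lamP_star x x0 c0 c2 b2); auto.
  rewrite (lamQ_star c (x · x0 · inv x) c2 b3 c3); auto.
  assert (Hcg : cong (x · b1 · inv x) b3).
  { apply (LpiQP (ell x (ell b1 c1)) _ (ell b3 c3) _).
    - apply HQl, HQl; auto.
    - apply Rmul; auto. apply Rmul; auto. apply Rinv; auto.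
    - apply HQl; auto.
    - auto.
    - rewrite <- ell_def.
      replace (ell x (ell b1 c1) · (x · b1 · inv x)) with (ell x (c ∘ x0 ∘ ci c))
        by (rewrite E1', ell_def, ell_mul, (ell_triv P HPt x b1); auto).
      rewrite <- E3.
      apply cong_trans with (ell x (inv c · x0 · c)).
      + apply cong_ell, conj_circ; auto.
      + apply cong_trans with (inv c · (x · x0 · inv x) · c).
        * rewrite !ell_mul. rewrite (ell_triv P HPt x x0); auto.
          apply cong_mul; [apply cong_mul|].
          -- apply cong_sym, theta; auto. apply Rinv; auto.
          -- apply cong_refl.
          -- apply cong_sym, theta; auto.
        * apply cong_sym, conj_circ; auto. }
  replace b3 with (x · b1 · inv x · (inv (x · b1 · inv x) · b3)) by (gn; reflexivity).
  rewrite (star_shift (x · b1 · inv x) (inv (x · b1 · inv x) · b3) c2); [reflexivity| |exact Hcg].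
  apply Rmul; auto. apply Rmul; auto. apply Rinv; auto.
Qed.

End Pair.

Section Main.
Variables B C : A -> Prop.
Hypothesis HBs : is_sub_skew_brace A B.
Hypothesis HCs : is_sub_skew_brace A C.
Hypothesis Hprod : is_mul_product A B C \/ is_circ_product A B C.
Hypothesis HBt : is_trivial_on A B.
Hypothesis HCt : is_trivial_on A C.
Hypothesis HBl : is_left_ideal_op A B.
Hypothesis HBr : is_right_ideal_op A B.
Hypothesis HCl : is_left_ideal_op A C.
Hypothesis HCr : is_right_ideal_op A C.

Lemma inv_swap (R1 R2 : A -> Prop) :
  is_sub_skew_brace A R1 -> is_sub_skew_brace A R2 ->
  (forall n, exists p q, R1 p /\ R2 q /\ n = p · q) ->
  (forall n, exists q p, R2 q /\ R1 p /\ n = q · p).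
Proof.
  intros H1 H2 Hd n. destruct (Hd (inv n)) as (p & q & Hp & Hq & Heq).
  exists (inv q), (inv p). split; [apply Rinv; auto|split; [apply Rinv; auto|]].
  rewrite <- inv_mul, <- Heq, inv_inv. reflexivity.
Qed.

Lemma decs : (forall n, exists p q, B p /\ C q /\ n = p · q) /\ (forall n, exists q p, C q /\ B p /\ n = q · p).
Proof.
  destruct Hprod as [Hm | Hc].
  - split; [exact Hm|]. apply inv_swap; auto.
  - assert (HCB : forall n, exists q p, C q /\ B p /\ n = q · p).
    { intro n. destruct (Hc n) as (x & c & Hx & Hcc & ->).
      exists (lambda_op A x c), x. split; [apply HCl; auto|split; auto]. apply ell_def. }
    split; [|exact HCB]. apply inv_swap; auto.
Qed.

Lemma HG : good B C.
Proof.
  destruct decs as [d1 d2]. unfold good. repeat (split; [assumption|]). assumption.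
Qed.
Lemma HG' : good C B. Proof. apply good_swap, HG. Qed.

Lemma dBC n : exists p q, B p /\ C q /\ n = p · q. Proof. apply decs. Qed.
Lemma dCB n : exists q p, C q /\ B p /\ n = q · p. Proof. apply decs. Qed.
Lemma dBoC n : exists p q, B p /\ C q /\ n = p ∘ q. Proof. apply (dPoQ B C HG). Qed.
Lemma dCoB n : exists q p, C q /\ B p /\ n = q ∘ p. Proof. apply (dPoQ C B HG'). Qed.

Definition Sg (z : A) : Prop :=
  (exists x c, B x /\ C c /\ z = star x c) \/ (exists c x, C c /\ B x /\ z = star c x).

Lemma SgI x c : B x -> C c -> mul_gen A Sg (star x c).
Proof. intros. apply mul_gen_incl. left. exists x, c. auto. Qed.
Lemma SgII c x : C c -> B x -> mul_gen A Sg (star c x).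
Proof. intros. apply mul_gen_incl. right. exists c, x. auto. Qed.

Lemma MS1 : mul_gen A Sg one. Proof. destruct (mul_gen_sub Sg) as [h _]. exact h. Qed.
Lemma MSmul x y : mul_gen A Sg x -> mul_gen A Sg y -> mul_gen A Sg (x · y).
Proof. destruct (mul_gen_sub Sg) as [_ [h _]]. apply h. Qed.

Lemma starB_any x n : B x -> mul_gen A Sg (star x n).
Proof.
  intro Hx. destruct (dCB n) as (c & y & Hc & Hy & ->).
  rewrite star_mul_r, (star_triv B HBt x y Hx Hy). gn. apply SgI; auto.
Qed.
Lemma starC_any c n : C c -> mul_gen A Sg (star c n).
Proof.
  intro Hc. destruct (dBC n) as (y & d & Hy & Hd & ->).
  rewrite star_mul_r, (star_triv C HCt c d Hc Hd). gn. apply SgII; auto.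
Qed.

Lemma der_S v : derived A v -> mul_gen A Sg v.
Proof.
  intro Hv. unfold derived, star_set in Hv.
  refine (mul_gen_ind _ (mul_gen A Sg) v (mul_gen_sub Sg) _ Hv).
  intros y (a & b & _ & _ & ->).
  destruct (dBoC a) as (x & c & Hx & Hc & ->).
  rewrite star_circ_l, lam_star_eq.
  apply MSmul; [apply MSmul|].
  - apply starB_any; auto.
  - apply starC_any; auto.
  - apply starB_any; auto.
Qed.

Lemma der_lam g v : derived A v -> derived A (lam g v).
Proof.
  intro Hv. unfold derived, star_set in *.
  set (T := fun z : A => exists x y : A, True /\ True /\ z = star x y) in *.
  destruct (mul_gen_sub T) as (h1 & h2 & h3).
  apply (mul_gen_ind T (fun v => mul_gen A T (lam g v)) v); [| |exact Hv].
  - split; [|split].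
    + rewrite lam_one. exact h1.
    + intros x y Hx Hy. rewrite lam_mul. apply h2; auto.
    + intros x Hx. rewrite lam_inv. apply h3; auto.
  - intros y (a & b & _ & _ & ->). rewrite lam_star. apply mul_gen_incl.
    exists (g ∘ a ∘ ci g), (lam g b). auto.
Qed.

Lemma P2 x c v : B x -> C c -> derived A v -> lam x (lam c v) = lam c (lam x v).
Proof.
  intros Hx Hc Hv. apply der_S in Hv.
  apply (mul_gen_ind Sg (fun v => lam x (lam c v) = lam c (lam x v)) v); [| |exact Hv].
  - split; [|split].
    + rewrite !lam_one. reflexivity.
    + intros y z Hy Hz. rewrite !lam_mul, Hy, Hz. reflexivity.
    + intros y Hy. rewrite !lam_inv, Hy. reflexivity.
  - intros y [(x0 & c0 & Hx0 & Hc0 & ->) | (c0 & x0 & Hc0 & Hx0 & ->)].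
    + apply (P2gen B C HG); auto.
    + symmetry. apply (P2gen C B HG'); auto.
Qed.

Lemma nu_lam_B x m v : B x -> derived A v -> lam (lam x m) v = lam m v.
Proof.
  intros Hx Hv. destruct (dBoC m) as (x2 & c2 & Hx2 & Hc2 & ->).
  assert (Hx3 : B (ci x2 ∘ x ∘ x2)). { apply Rcirc; auto. apply Rcirc; auto. apply Rci; auto. }
  assert (Hm : lam x (x2 ∘ c2) = x2 ∘ lam (ci x2 ∘ x ∘ x2) c2).
  { rewrite (lam_def x2 c2), lam_mul, (lam_triv B HBt x x2 Hx Hx2).
    rewrite mul_as_circ. rewrite <- !lam_circ. reflexivity. }
  rewrite Hm, lam_circ.
  rewrite (N3 B C HG); auto.
  rewrite (P2 _ c2); auto.
  - rewrite lam_ci_r. rewrite lam_circ. reflexivity.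
  - apply der_lam; auto.
Qed.

Lemma nu_lam_C c m v : C c -> derived A v -> lam (lam c m) v = lam m v.
Proof.
  intros Hc Hv. destruct (dCoB m) as (c2 & x2 & Hc2 & Hx2 & ->).
  assert (Hc3 : C (ci c2 ∘ c ∘ c2)). { apply Rcirc; auto. apply Rcirc; auto. apply Rci; auto. }
  assert (Hm : lam c (c2 ∘ x2) = c2 ∘ lam (ci c2 ∘ c ∘ c2) x2).
  { rewrite (lam_def c2 x2), lam_mul, (lam_triv C HCt c c2 Hc Hc2).
    rewrite mul_as_circ. rewrite <- !lam_circ. reflexivity. }
  rewrite Hm, lam_circ.
  rewrite (N3 C B HG'); auto.
  rewrite <- (P2 x2 _); auto.
  - rewrite lam_ci_r. rewrite lam_circ. reflexivity.
  - apply der_lam; auto.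
Qed.

Lemma nu_lam g m v : derived A v -> lam (lam g m) v = lam m v.
Proof.
  intro Hv. destruct (dBoC g) as (x & c & Hx & Hc & ->).
  rewrite lam_circ. rewrite nu_lam_B; auto. apply nu_lam_C; auto.
Qed.

Lemma mul_hom p q v : derived A v -> lam (p · q) v = lam p (lam q v).
Proof.
  intro Hv. rewrite (mul_as_circ p q), lam_circ, nu_lam; auto.
Qed.

Lemma lam_der_fix u v : derived A u -> derived A v -> lam u v = v.
Proof.
  intros Hu Hv. unfold derived, star_set in Hu.
  refine (mul_gen_ind _ (fun u => forall v, derived A v -> lam u v = v) u _ _ Hu v Hv).
  - split; [|split].
    + intros w _. apply lam1.
    + intros x y Hx Hy w Hw. rewrite mul_hom; auto. rewrite Hy; auto.
    + intros x Hx w Hw. transitivity (lam (inv x) (lam x w)).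
      { rewrite (Hx w Hw). reflexivity. }
      rewrite <- mul_hom; auto. rewrite mulVl. apply lam1.
  - intros y (a & b & _ & _ & ->) w Hw.
    rewrite star_unfold. rewrite (mul_hom (inv a · (a ∘ b)) (inv b) w Hw).
    assert (Hw1 : derived A (lam (inv b) w)) by (apply der_lam; auto).
    rewrite (mul_hom (inv a) (a ∘ b) _ Hw1), lam_circ.
    rewrite <- (mul_hom b (inv b) w Hw), mulVr, lam1.
    rewrite <- (mul_hom (inv a) a w Hw), mulVl. apply lam1.
Qed.

Lemma main_res : meta_trivial A.
Proof.
  intros u v Hu Hv. rewrite lam_def, lam_der_fix; auto.
Qed.

End Main.
End Gen.

Theorem theorem1p5 (A : skew_brace) (B C : A -> Prop) :
  is_sub_skew_brace A B -> is_sub_skew_brace A C ->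
  (is_mul_product A B C \/ is_circ_product A B C) ->
  is_trivial_on A B -> is_trivial_on A C ->
  is_left_ideal_op A B -> is_right_ideal_op A B ->
  is_left_ideal_op A C -> is_right_ideal_op A C ->
  meta_trivial A.
Proof.
  intros. apply (main_res A B C); assumption.
Qed.
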